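(* Let $(A,+,\circ)$ be a finite left brace which has a transitive cycle base, let $g$ be an element of a transitive cycle base $X$ of $A$, and let $(A,\bullet)$ be the cycle set given by $a\bullet b:=\lambda_a(g)^{-}\circ b$. Let $H$ be the subgroup of $(A,\circ)$ such that $\mathrm{Ret}(A,\bullet)=A/H$ (namely $H=\{h\in A\mid\lambda_h(g)=g\}$). If $H$ is a normal subgroup of $(A,\circ)$, then $H=\mathrm{Soc}(A)$.
   Context: A left brace is a set $A$ with two operations such that $(A,+)$ is an abelian group, $(A,\circ)$ is a group, and $a\circ(b+c)=a\circ b-a+a\circ c$. $\lambda_a(b):=-a+a\circ b$; $a\mapsto\lambda_a$ is a homomorphism $(A,\circ)\to\mathrm{Aut}(A,+)$. $a^{-}$ is the inverse of $a$ in $(A,\circ)$. $\mathrm{Soc}(A):=\{a\mid\lambda_a=\mathrm{id}_A\}$. A transitive cycle base is a single $\lambda$-orbit generating $(A,+)$. For a cycle set (left multiplications $\sigma_x$ bijective, $(x\cdot y)\cdot(x\cdot z)=(y\cdot x)\cdot(y\cdot z)$), $\mathrm{Ret}(X)$ is the quotient by $x\sim y\iff\sigma_x=\sigma_y$; for $(A,\bullet)$ its classes are the left cosets $a\circ H$. *)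

(* Defs.v *)
From mathcomp Require Import all_boot.
Set Implicit Arguments. Unset Strict Implicit. Unset Printing Implicit Defensive.

Record left_brace (T : finType) := LeftBrace {
  badd : T -> T -> T;
  bopp : T -> T;
  bzero : T;
  bmul : T -> T -> T;
  binv : T -> T;
  bone : T;
  baddA : forall a b c, badd a (badd b c) = badd (badd a b) c;
  baddC : forall a b, badd a b = badd b a;
  badd0 : forall a, badd bzero a = a;
  baddN : forall a, badd (bopp a) a = bzero;
  bmulA : forall a b c, bmul a (bmul b c) = bmul (bmul a b) c;
  bmul1 : forall a, bmul bone a = a;
  bmulV : forall a, bmul (binv a) a = bone;
  bbrace : forall a b c,
    bmul a (badd b c) = badd (badd (bmul a b) (bopp a)) (bmul a c)
}.

Section BraceDefs.
Variables (T : finType) (B : left_brace T).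

Definition blambda (a b : T) : T := badd B (bopp B a) (bmul B a b).

Definition bsoc : {set T} := [set a | [forall b, blambda a b == b]].

Definition blorbit (x : T) : {set T} := [set blambda a x | a : T].

Definition add_generates (X : {set T}) : Prop :=
  forall S : {set T},
    bzero B \in S ->
    (forall a b, a \in S -> b \in S -> badd B a b \in S) ->
    (forall a, a \in S -> bopp B a \in S) ->
    X \subset S -> S = [set: T].

Definition transitive_cycle_base (X : {set T}) : Prop :=
  (exists x, X = blorbit x) /\ add_generates X.

Definition bcycle_op (g : T) (a b : T) : T := bmul B (binv B (blambda a g)) b.

Definition bstabH (g : T) : {set T} := [set h | blambda h g == g].

Definition bnormal (H : {set T}) : Prop :=
  forall a h, h \in H -> bmul B (bmul B a h) (binv B a) \in H.

End BraceDefs.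

(* Main.v *)
Require Import Defs.
From mathcomp Require Import all_boot.

Section Aux.
Variables (T : finType) (B : left_brace T).
Local Notation "a + b" := (badd B a b).
Local Notation "- a" := (bopp B a).
Local Notation "0" := (bzero B).
Local Notation "a * b" := (bmul B a b).
Local Notation "1" := (bone B).
Local Notation inv := (binv B).
Local Notation lam := (blambda B).

Lemma addr0' a : a + 0 = a.
Proof. by rewrite baddC badd0. Qed.
Lemma addrN' a : a + - a = 0.
Proof. by rewrite baddC baddN. Qed.
Lemma addKl' a b : - a + (a + b) = b.
Proof. by rewrite baddA baddN badd0. Qed.
Lemma addcan a b c : a + b = a + c -> b = c.
Proof. by move=> E; rewrite -(addKl' a b) E addKl'. Qed.
Lemma opp_uniq x y : x + y = 0 -> x = - y.
Proof. by move=> E; rewrite -(addr0' x) -(addrN' y) baddA E badd0. Qed.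
Lemma oppK' a : - (- a) = a.
Proof. by symmetry; apply: opp_uniq; rewrite addrN'. Qed.
Lemma opp_add a b : - (a + b) = - a + - b.
Proof.
symmetry; apply: opp_uniq.
rewrite (baddC B a b) baddA -(baddA B (- a)) baddN addr0' baddN //.
Qed.
Lemma addKr' a b : a + (- a + b) = b.
Proof. by rewrite baddA addrN' badd0. Qed.
Lemma swap_lem a u v : (a + u) + (- a + v) = u + v.
Proof. by rewrite (baddC B a u) -baddA addKr'. Qed.

Lemma mulrV' a : a * inv a = bone B.
Proof.
rewrite -{1}(bmul1 B (a * inv a)) -{1}(bmulV B (inv a)).
by rewrite -bmulA (bmulA B (inv a) a) bmulV bmul1 bmulV.
Qed.
Lemma mulr1' a : a * bone B = a.
Proof. by rewrite -(bmulV B a) bmulA mulrV' bmul1. Qed.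
Lemma invK' a : inv (inv a) = a.
Proof. by rewrite -(mulr1' (inv (inv a))) -(bmulV B a) bmulA bmulV bmul1. Qed.

Lemma lam_add a b c : lam a (b + c) = lam a b + lam a c.
Proof. by rewrite /blambda bbrace !baddA. Qed.
Lemma lam0 a : lam a 0 = 0.
Proof.
have E : lam a (bzero B) + bzero B = lam a (bzero B) + lam a (bzero B) by rewrite -lam_add !addr0'.
exact: esym (addcan _ _ _ E).
Qed.
Lemma lamN a b : lam a (- b) = - lam a b.
Proof. by apply: opp_uniq; rewrite -lam_add baddN lam0. Qed.
Lemma lamM a b c : lam (a * b) c = lam a (lam b c).
Proof.
rewrite [lam b c]/blambda lam_add lamN /blambda opp_add oppK'.
by rewrite swap_lem bmulA.
Qed.
End Aux.

Theorem mainTheorem4 (T : finType) (B : left_brace T) (X : {set T}) (g : T) :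
  transitive_cycle_base B X -> g \in X ->
  bnormal B (bstabH B g) ->
  bstabH B g = bsoc B.
Proof.
move=> [[x ->] Hgen] /imsetP [c _ Hg] Hn.
apply/setP => h; rewrite !inE.
apply/idP/idP; last first.
  by move/forallP => /(_ g).
move/eqP=> Hh.
pose S := [set b | blambda B h b == b].
have ST : S = [set: T].
  apply: Hgen.
  - by rewrite inE lam0.
  - by move=> a b; rewrite !inE lam_add => /eqP -> /eqP ->.
  - by move=> a; rewrite !inE lamN => /eqP ->.
  - apply/subsetP => y /imsetP [a _ ->]; rewrite inE.
    have -> : blambda B a x = blambda B (bmul B a (binv B c)) g.
      by rewrite Hg -lamM -bmulA bmulV mulr1'.
    set d := bmul B a (binv B c).
    have Hd := Hn (binv B d) h.
    rewrite !inE invK' in Hd; have Hd' := Hd (introT eqP Hh).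
    rewrite -lamM.
    have -> : bmul B h d = bmul B d (bmul B (bmul B (binv B d) h) d).
      by rewrite !bmulA mulrV' bmul1.
    by rewrite lamM (eqP Hd').
apply/forallP => b.
have : b \in S by rewrite ST inE.
by rewrite inE.
Qed.
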